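(* Let $n$ be a positive integer and let $u$ denote the unique positive real root of $$x^{2n} + x^{2n-1} + \cdots + x^{n} - x^{n-1} - x^{n-2} - \cdots - x - 1 = 0$$ (so $u\in(0,1)$). Then $$2\,\mathrm{Li}_2\!\left(u^{n+1}\right) - 2\,\mathrm{Li}_2\!\left(u^{n}\right) - \mathrm{Li}_2(u) - n^2 \log^2(u) = -\zeta(2).$$
   Context: $\mathrm{Li}_2(z)=\sum_{k\ge1} z^k/k^2$ for $|z|\le 1$ is the dilogarithm, $\log$ is the real natural logarithm, and $\zeta(2)=\pi^2/6$. *)

(* Defs.v *)
From Stdlib Require Import Reals.
From Coquelicot Require Import Coquelicot.
Open Scope R_scope.

Definition Li2 (z : R) : R := Series (fun k : nat => z ^ (S k) / (INR (S k)) ^ 2).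

Definition zeta2 : R := PI ^ 2 / 6.

Definition Pn (n : nat) (x : R) : R :=
  sum_f_R0 (fun k => x ^ (n + k)) n - sum_f_R0 (fun k => x ^ k) (n - 1).

(* Main.v *)
Require Import Defs.
From Stdlib Require Import Reals Lra Lia.
From Coquelicot Require Import Coquelicot.
Open Scope R_scope.


Lemma ftc (F f : R -> R) a b : a <= b ->
  (forall x, a <= x <= b -> is_derive F x (f x)) ->
  (forall x, a <= x <= b -> continuous f x) -> RInt f a b = F b - F a.
Proof.
  intros Hab HF Hf.
  apply is_RInt_unique.
  assert (H := is_RInt_derive F f a b).
  rewrite Rmin_left in H by lra. rewrite Rmax_right in H by lra.
  apply H; auto.
Qed.

Lemma contD (f : R -> R) x : ex_derive f x -> continuous f x.
Proof. intro H. exact (@ex_derive_continuous R_AbsRing R_NormedModule f x H). Qed.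

Lemma t1 k (x:R) : is_derive (fun x => sin x * cos x ^ (S k)) x
   (INR (S (S k)) * cos x ^ (S (S k)) - INR (S k) * cos x ^ k).
Proof.
  auto_derive. trivial. change (pred (S k)) with k.
  change (match k with 0%nat => 1 | S _ => INR k + 1 end) with (INR (S k)).
  rewrite !S_INR. rewrite <- !tech_pow_Rmult.
  pose proof (sin2_cos2 x). unfold Rsqr in H.
  replace (sin x * (1 * - sin x * ((INR k + 1) * cos x ^ k))) with (- (sin x * sin x) * ((INR k + 1) * cos x ^ k)) by ring.
  replace (sin x * sin x) with (1 - cos x * cos x) by lra.
  ring.
Qed.

Lemma exR (f : R -> R) a b : (forall x, ex_derive f x) -> ex_RInt f a b.
Proof. intros H. apply (@ex_RInt_continuous R_CompleteNormedModule). intros. apply contD. auto. Qed.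

Definition Ic (n : nat) : R := RInt (fun x => cos x ^ (2*n)) 0 (PI/2).
Definition Jc (n : nat) : R := RInt (fun x => x^2 * cos x ^ (2*n)) 0 (PI/2).

Lemma PI2_pos : 0 < PI/2.
Proof. pose proof PI_RGT_0. lra. Qed.

Ltac rr := match goal with |- ?a = ?b => change (@eq R a b) end.

Lemma RInt_lin (f g : R -> R) a b c d : ex_RInt f a b -> ex_RInt g a b ->
  RInt (fun x => c * f x - d * g x) a b = c * RInt f a b - d * RInt g a b.
Proof.
  intros Hf Hg.
  change (fun x => c * f x - d * g x) with (fun x => minus (scal c (f x)) (scal d (g x))).
  rewrite (RInt_minus (V:=R_CompleteNormedModule)).
  rewrite !(RInt_scal (V:=R_CompleteNormedModule)); auto.
  apply (ex_RInt_scal (V:=R_CompleteNormedModule)); auto.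
  apply (ex_RInt_scal (V:=R_CompleteNormedModule)); auto.
Qed.

Lemma I_rec n : INR (S (S (2*n))) * Ic (S n) = INR (S (2*n)) * Ic n.
Proof.
  pose proof PI2_pos.
  assert (H1 := ftc (fun x => sin x * cos x ^ (S (2*n)))
    (fun x => INR (S (S (2*n))) * cos x ^ (S (S (2*n))) - INR (S (2*n)) * cos x ^ (2*n)) 0 (PI/2)).
  cbv beta in H1. rewrite sin_PI2, cos_PI2, sin_0 in H1. rewrite pow_i in H1 by lia.
  rewrite RInt_lin in H1 by (apply exR; intros; auto_derive; trivial).
  unfold Ic. replace (2 * S n)%nat with (S (S (2*n))) by lia.
  apply Rminus_diag_uniq. rewrite H1. rr; ring. lra. intros; apply t1.
  intros; apply contD; auto_derive; trivial.
Qed.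

Lemma t2 k c (x:R) : 2 * c = INR (S (S k)) -> is_derive (fun x => x * cos x ^ (S (S k)) + c * (x^2 * (sin x * cos x ^ (S k)))) x
   (cos x ^ (S (S k)) + c * (x^2 * (INR (S (S k)) * cos x ^ (S (S k)) - INR (S k) * cos x ^ k))).
Proof.
  intro Hc.
  auto_derive. trivial. change (pred (S k)) with k. change (pred (S (S k))) with (S k).
  change (match k with 0%nat => 1 | S _ => INR k + 1 end) with (INR (S k)).
  rewrite <- Hc. rewrite !S_INR.  rewrite <- !tech_pow_Rmult.
  replace (INR k + 1 + 1) with (2*c) by (rewrite Hc, !S_INR; ring).
  pose proof (sin2_cos2 x). unfold Rsqr in H.
  assert (E: sin x ^ 2 = 1 - cos x ^ 2) by (simpl; lra).
  ring_simplify. rewrite E. assert (Ek: INR k = 2*c - 2) by (rewrite !S_INR in Hc; lra). rewrite Ek.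
  match goal with |- ?a = ?b => change (@eq R a b) end. ring.
Qed.

Lemma RInt_lin3 (f g h : R -> R) a b c d : ex_RInt f a b -> ex_RInt g a b -> ex_RInt h a b ->
  RInt (fun x => f x + (c * g x - d * h x)) a b = RInt f a b + (c * RInt g a b - d * RInt h a b).
Proof.
  intros Hf Hg Hh.
  change (fun x => f x + (c * g x - d * h x)) with (fun x => plus (f x) ((fun y => c * g y - d * h y) x)).
  rewrite (RInt_plus (V:=R_CompleteNormedModule)); auto.
  rewrite RInt_lin; auto.
  apply (ex_RInt_minus (V:=R_CompleteNormedModule)); apply (ex_RInt_scal (V:=R_CompleteNormedModule)); auto.
Qed.

Lemma J_rec m : Ic (S m) = INR (S m) * (INR (S (2*m)) * Jc m - INR (S (S (2*m))) * Jc (S m)).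
Proof.
  pose proof PI2_pos.
  set (k := (2*m)%nat). set (c := INR (S m)).
  assert (Hc : 2 * c = INR (S (S k))) by (unfold c, k; rewrite !S_INR, mult_INR; simpl; ring).
  assert (H1 := ftc (fun x => x * cos x ^ (S (S k)) + c * (x^2 * (sin x * cos x ^ (S k))))
    (fun x => cos x ^ (S (S k)) + c * (x^2 * (INR (S (S k)) * cos x ^ (S (S k)) - INR (S k) * cos x ^ k))) 0 (PI/2)).
  cbv beta in H1. rewrite cos_PI2, sin_0 in H1. rewrite pow_i in H1 by lia.
  rewrite (RInt_ext (V:=R_CompleteNormedModule) _ (fun x => cos x ^ (S (S k)) + (c * INR (S (S k)) * (x^2 * cos x ^ (S (S k))) - c * INR (S k) * (x^2 * cos x ^ k)))) in H1.
  2:{ intros; rr; ring. }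
  rewrite RInt_lin3 in H1 by (apply exR; intros; auto_derive; trivial).
  unfold Ic, Jc. replace (2 * S m)%nat with (S (S k)) by (unfold k; lia). fold k.
  assert (H2 : RInt (fun x => cos x ^ S (S k)) 0 (PI / 2) +
      (c * INR (S (S k)) * RInt (fun x => x ^ 2 * cos x ^ S (S k)) 0 (PI / 2) -
       c * INR (S k) * RInt (fun x => x ^ 2 * cos x ^ k) 0 (PI / 2)) = 0).
  { rewrite H1. rewrite !pow_i by lia. rr; ring. lra. intros; apply t2; auto.
    intros; apply contD; auto_derive; trivial. }
  lra.
Qed.

Lemma xcos_le_sin x : 0 <= x <= PI/2 -> x * cos x <= sin x.
Proof.
  intros Hx. pose proof PI2_pos.
  destruct (MVT_gen (fun x => sin x - x * cos x) 0 x (fun t => t * sin t)) as [c [Hc Ec]].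
  - intros t Ht. auto_derive; trivial. rr; ring.
  - intros t Ht. apply continuity_pt_filterlim. apply (contD (fun x => sin x - x * cos x)). auto_derive; trivial.
  - rewrite Rmin_left in Hc by lra. rewrite Rmax_right in Hc by lra.
    rewrite sin_0 in Ec.
    assert (0 <= sin c) by (apply sin_ge_0; lra).
    assert (0 <= c * sin c * (x - 0)) by (apply Rmult_le_pos; [apply Rmult_le_pos|]; lra).
    lra.
Qed.

Lemma J_bound m : 0 <= Jc (S m) <= Ic m - Ic (S m).
Proof.
  pose proof PI2_pos.
  split.
  - unfold Jc. replace 0 with (RInt (fun _ => 0) 0 (PI/2)) at 1.
    2:{ rewrite (RInt_const (V:=R_CompleteNormedModule)). unfold scal; simpl; unfold mult; simpl; rr; ring. }
    apply RInt_le. lra. apply exR; intros; auto_derive; trivial.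
    apply exR; intros; auto_derive; trivial.
    intros x Hx. apply Rmult_le_pos. apply pow2_ge_0. apply pow_le. apply cos_ge_0; lra.
  - replace (Ic m - Ic (S m)) with (RInt (fun x => 1 * cos x ^ (2*m) - 1 * cos x ^ (2 * S m)) 0 (PI/2)).
    2:{ rewrite RInt_lin. unfold Ic; rr; ring. all: apply exR; intros; auto_derive; trivial. }
    unfold Jc. apply RInt_le. lra. apply exR; intros; auto_derive; trivial.
    apply exR; intros; auto_derive; trivial.
    intros x Hx. replace (2 * S m)%nat with (S (S (2*m))) by lia.
    pose proof (xcos_le_sin x ltac:(lra)).
    assert (0 <= cos x) by (apply cos_ge_0; lra).
    assert (0 <= x * cos x) by (apply Rmult_le_pos; lra).
    pose proof (sin2_cos2 x). unfold Rsqr in *.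
    assert (x * cos x * (x * cos x) <= sin x * sin x) by nra.
    assert (0 <= cos x ^ (2*m)) by (apply pow_le; lra).
    replace (cos x ^ S (S (2*m))) with (cos x * cos x * cos x ^ (2*m)) by (simpl; ring).
    replace (x ^ 2 * (cos x * cos x * cos x ^ (2 * m))) with ((x * cos x * (x * cos x)) * cos x ^ (2*m)) by ring.
    replace (1 * cos x ^ (2 * m) - 1 * (cos x * cos x * cos x ^ (2 * m))) with ((sin x * sin x) * cos x ^ (2*m)) by nra.
    apply Rmult_le_compat_r; lra.
Qed.

Lemma I0 : Ic 0 = PI/2.
Proof.
  unfold Ic. change (2*0)%nat with 0%nat.
  change (RInt (fun _ => 1) 0 (PI/2) = PI/2).
  rewrite (RInt_const (V:=R_CompleteNormedModule)). unfold scal; simpl; unfold mult; simpl. rr; ring.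
Qed.

Lemma J0 : Jc 0 = (PI/2)^3/3.
Proof.
  unfold Jc. pose proof PI2_pos.
  rewrite (ftc (fun x => x^3/3)). rr; field. lra.
  intros; auto_derive; trivial. simpl; rr; field.
  intros; apply contD; auto_derive; trivial.
Qed.

Lemma Ipos n : 0 < Ic n.
Proof.
  induction n.
  - rewrite I0. apply PI2_pos.
  - pose proof (I_rec n).
    assert (0 < INR (S (S (2*n)))) by (apply lt_0_INR; lia).
    assert (0 < INR (S (2*n))) by (apply lt_0_INR; lia).
    assert (Ic (S n) = INR (S (2 * n)) * Ic n / INR (S (S (2 * n)))) by (rewrite <- H; field; lra).
    rewrite H2. apply Rdiv_lt_0_compat; auto. apply Rmult_lt_0_compat; auto.
Qed.

Definition rr_ n := Jc n / Ic n.

Lemma r_step m : rr_ m - rr_ (S m) = / (2 * INR (S m) ^ 2).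
Proof.
  unfold rr_. pose proof (I_rec m) as H. pose proof (J_rec m) as H0.
  pose proof (Ipos m). pose proof (Ipos (S m)).
  assert (H3 : INR (S (S (2*m))) = 2 * INR (S m)) by (rewrite !S_INR, mult_INR; simpl; ring).
  assert (H4 : INR (S (2*m)) = 2 * INR (S m) - 1) by (rewrite !S_INR, mult_INR; simpl; ring).
  rewrite H3, H4 in *.
  assert (0 < INR (S m)) by (apply lt_0_INR; lia). assert (1 <= INR (S m)) by (apply (le_INR 1); lia).
  assert (E1 : Ic m = 2 * INR (S m) * Ic (S m) / (2 * INR (S m) - 1)).
  { rewrite H. field. lra. }
  assert (E2 : Jc m = (Ic (S m) / INR (S m) + 2 * INR (S m) * Jc (S m)) / (2 * INR (S m) - 1)).
  { rewrite H0. field. lra. }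
  rewrite E1, E2. field. repeat split; lra.
Qed.

Lemma r_bound m : 0 <= rr_ (S m) <= / INR (S (2*m)).
Proof.
  unfold rr_. pose proof (J_bound m). pose proof (I_rec m).
  pose proof (Ipos m). pose proof (Ipos (S m)).
  assert (0 < INR (S (2*m))) by (apply lt_0_INR; lia).
  assert (INR (S (S (2*m))) = INR (S (2*m)) + 1) by (rewrite S_INR; ring).
  rewrite H4 in H0.
  split. apply Rdiv_le_0_compat; lra.
  apply (Rmult_le_reg_r (Ic (S m))); auto.
  replace (Jc (S m) / Ic (S m) * Ic (S m)) with (Jc (S m)) by (field; lra).
  assert (Ic m = (INR (S (2 * m)) + 1) * Ic (S m) / INR (S (2 * m))) by (rewrite H0; field; lra).
  rewrite H5 in H. 
  replace (/ INR (S (2 * m)) * Ic (S m)) with ((INR (S (2 * m)) + 1) * Ic (S m) / INR (S (2 * m)) - Ic (S m)) by (field; lra).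
  lra.
Qed.

Lemma r0 : rr_ 0 = PI^2/12.
Proof. unfold rr_. rewrite I0, J0. pose proof PI2_pos. field. lra. Qed.

Lemma psum N : sum_n (fun k => / INR (S k) ^ 2) N = 2 * (rr_ 0 - rr_ (S N)).
Proof.
  induction N.
  - rewrite sum_O. pose proof (r_step 0). 
    replace (2 * (rr_ 0 - rr_ 1)) with (2 * / (2 * INR 1 ^ 2)) by (rewrite H; ring).
    simpl. rr; field.
  - rewrite sum_Sn, IHN. pose proof (r_step (S N)).
    change plus with Rplus.
    assert (0 < INR (S (S N))) by (apply lt_0_INR; lia).
    replace (rr_ (S (S N))) with (rr_ (S N) - / (2 * INR (S (S N)) ^ 2)) by lra.
    rr; field. lra.
Qed.

Lemma basel : is_series (fun k => / INR (S k) ^ 2) (PI^2/6).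
Proof.
  assert (L : is_lim_seq (fun N => rr_ (S N)) 0).
  { apply is_lim_seq_le_le with (u := fun _ => 0) (w := fun N => / INR (S (2*N))).
    - intros; apply r_bound.
    - apply is_lim_seq_const.
    - replace (Finite 0) with (Rbar_inv p_infty) by reflexivity.
      apply is_lim_seq_inv. 2: discriminate.
      apply (is_lim_seq_le_p_loc INR).
      + exists 0%nat. intros n _. apply le_INR. lia.
      + apply is_lim_seq_INR. }
  assert (L2 : is_lim_seq (sum_n (fun k => / INR (S k) ^ 2)) (2 * (PI^2/12 - 0))).
  { apply is_lim_seq_ext with (u := fun N => 2 * (rr_ 0 - rr_ (S N))).
    intros; rewrite psum; auto.
    apply (is_lim_seq_scal_l _ 2 (PI^2/12 - 0)).
    apply is_lim_seq_minus'. rewrite r0. apply is_lim_seq_const. exact L. }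
  replace (PI^2/6) with (2 * (PI^2/12 - 0)) by field.
  exact L2.
Qed.



Definition cc (k : nat) : R := / INR (S k) ^ 2.
Definition ee (k : nat) : R := / INR (S k).

Lemma Li2_PS x : Li2 x = PSeries (PS_incr_1 cc) x.
Proof.
  rewrite PSeries_incr_1. unfold Li2, PSeries. rewrite <- Series_scal_l.
  apply Series_ext. intros n. unfold cc. rewrite <- tech_pow_Rmult. field. apply not_0_INR. lia.
Qed.

Lemma inv_lim : is_lim_seq (fun n => / INR (S n)) 0.
Proof.
  replace (Finite 0) with (Rbar_inv p_infty) by reflexivity.
  apply is_lim_seq_inv. 2: discriminate.
  apply (is_lim_seq_incr_1 INR p_infty). apply is_lim_seq_INR.
Qed.

Lemma rad_cc : CV_radius cc = 1.
Proof.
  replace (Finite 1) with (Finite (/ 1)) by (f_equal; field).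
  apply CV_radius_finite_DAlembert.
  - intros n. unfold cc. apply Rinv_neq_0_compat. apply pow_nonzero. apply not_0_INR. lia.
  - lra.
  - apply is_lim_seq_ext with (u := fun n => (1 - / INR (S (S n))) * (1 - / INR (S (S n)))).
    + intros n. unfold cc. rewrite Rabs_right.
      * rewrite (S_INR (S n)). assert (0 < INR (S n)) by (apply lt_0_INR; lia). field. lra.
      * apply Rle_ge; left; apply Rdiv_lt_0_compat; apply Rinv_0_lt_compat; apply pow_lt; apply lt_0_INR; lia.
    + replace (Finite 1) with (Finite ((1 - 0) * (1 - 0))) by (f_equal; ring).
      apply is_lim_seq_mult'; apply is_lim_seq_minus'; try apply is_lim_seq_const;
      apply (proj1 (is_lim_seq_incr_1 (fun n => / INR (S n)) 0)); apply inv_lim.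
Qed.

Lemma const_deriv (f : R -> R) a b :
  (forall t, Rmin a b <= t <= Rmax a b -> is_derive f t 0) -> f b = f a.
Proof.
  intros H.
  destruct (MVT_gen f a b (fun _ => 0)) as [c [_ Hc]].
  - intros; apply H; lra.
  - intros t Ht. apply continuity_pt_filterlim.
    apply (ex_derive_continuous (K:=R_AbsRing) (V:=R_NormedModule)).
    exists 0. apply H; auto.
  - lra.
Qed.

Lemma rad_incr_cc : CV_radius (PS_incr_1 cc) = 1.
Proof. rewrite CV_radius_incr_1. apply rad_cc. Qed.

Lemma PSd_ee : forall n, PS_derive (PS_incr_1 cc) n = ee n.
Proof. intros n. unfold PS_derive. change (PS_incr_1 cc (S n)) with (cc n). unfold ee, cc. field. apply not_0_INR; lia. Qed.

Lemma rad_ee : CV_radius ee = 1.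
Proof.
  rewrite <- (CV_radius_ext _ _ PSd_ee). rewrite CV_radius_derive. apply rad_incr_cc.
Qed.

Lemma in_rad (a : nat -> R) x : CV_radius a = 1 -> Rabs x < 1 -> Rbar_lt (Rabs x) (CV_radius a).
Proof. intros H1 H2. rewrite H1. simpl. exact H2. Qed.

Lemma Li2_derive x : Rabs x < 1 -> is_derive Li2 x (PSeries ee x).
Proof.
  intros Hx.
  apply is_derive_ext with (f := PSeries (PS_incr_1 cc)).
  { intros t; rewrite Li2_PS; auto. }
  rewrite <- (PSeries_ext _ _ x PSd_ee).
  apply is_derive_PSeries. apply in_rad; auto. apply rad_incr_cc.
Qed.

Lemma log_series x : Rabs x < 1 -> x * PSeries ee x = - ln (1 - x).
Proof.
  intros Hx.
  rewrite <- PSeries_incr_1.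
  assert (Hr : CV_radius (PS_incr_1 ee) = 1) by (rewrite CV_radius_incr_1; apply rad_ee).
  set (G := fun t => PSeries (PS_incr_1 ee) t + ln (1 - t)).
  assert (G x = G 0).
  { apply const_deriv. intros t Ht.
    assert (Rabs t < 1).
    { apply Rabs_def1; destruct (Rabs_def2 x 1 Hx) as [A B];
      [ apply Rle_lt_trans with (Rmax 0 x); [lra | apply Rmax_lub_lt; lra]
      | apply Rlt_le_trans with (Rmin 0 x); [apply Rmin_glb_lt; lra | lra]]. }
    assert (0 < 1 - t) by (destruct (Rabs_def2 t 1 H); lra).
    assert (HD : is_derive G t (PSeries (PS_derive (PS_incr_1 ee)) t + (-1) / (1 - t))).
    { apply (is_derive_plus (K:=R_AbsRing) (V:=R_NormedModule)).
      + apply is_derive_PSeries. apply in_rad; auto.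
      + auto_derive. lra. field. lra. }
    replace (PSeries (PS_derive (PS_incr_1 ee)) t + (-1) / (1 - t)) with 0 in HD. exact HD.
    symmetry. rewrite (PSeries_ext _ (fun _ => 1)).
      + unfold PSeries. rewrite (is_series_unique _ (/ (1 - t))). field; lra.
        apply is_series_ext with (a := fun n => t ^ n). intros; rr; ring.
        apply is_series_geom; auto.
      + intros n. unfold PS_derive. change (PS_incr_1 ee (S n)) with (ee n). unfold ee. field. apply not_0_INR; lia. }
  unfold G in H. rewrite PSeries_0 in H. simpl PS_incr_1 in H.
  replace (1 - 0) with 1 in H by ring. rewrite ln_1 in H.
  change (@zero R_NormedModule) with 0 in H. lra.
Qed.

Lemma Li2_d y : 0 < y < 1 -> is_derive Li2 y (- ln (1 - y) / y).
Proof.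
  intros Hy. assert (Rabs y < 1) by (rewrite Rabs_right; lra).
  replace (- ln (1 - y) / y) with (PSeries ee y).
  apply Li2_derive; auto.
  rewrite <- log_series; auto. field. lra.
Qed.

Definition gfun a := 2 * Li2 (2 - / a) - 2 * Li2 a - Li2 ((2 * a - 1) / a ^ 2) - ln a ^ 2.

Lemma g_deriv a : 1/2 < a < 1 -> is_derive gfun a 0.
Proof.
  intros Ha.
  set (p := 2 - / a). set (q := (2 * a - 1) / a ^ 2).
  assert (Hp : 0 < p < 1).
  { unfold p. split; apply (Rmult_lt_reg_r a); try lra;
    replace ((2 - / a) * a) with (2 * a - 1) by (field; lra); lra. }
  assert (Hq : 0 < q < 1).
  { unfold q. assert (0 < a^2) by nra. split.
    apply Rdiv_lt_0_compat; lra.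
    apply (Rmult_lt_reg_r (a^2)); auto. replace ((2 * a - 1) / a ^ 2 * a ^ 2) with (2*a-1) by (field; lra). nra. }
  assert (D1 : is_derive (fun a => Li2 (2 - / a)) a (/ a ^ 2 * (- ln (1 - p) / p))).
  { apply (is_derive_comp Li2 (fun a => 2 - / a)). apply Li2_d; auto.
    auto_derive. lra. field. lra. }
  assert (D3 : is_derive (fun a => Li2 ((2 * a - 1) / a ^ 2)) a (2 * (1 - a) / a ^ 3 * (- ln (1 - q) / q))).
  { apply (is_derive_comp Li2 (fun a => (2 * a - 1) / a ^ 2)). apply Li2_d; auto.
    auto_derive. intro Hc; nra. field. lra. }
  assert (D2 : is_derive Li2 a (- ln (1 - a) / a)) by (apply Li2_d; lra).
  assert (D4 : is_derive (fun a => ln a ^ 2) a (2 * ln a / a)).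
  { auto_derive. lra. field. lra. }
  assert (D : is_derive gfun a (2 * (/ a ^ 2 * (- ln (1 - p) / p)) - 2 * (- ln (1 - a) / a)
                 - 2 * (1 - a) / a ^ 3 * (- ln (1 - q) / q) - 2 * ln a / a)).
  { unfold gfun.
    apply (is_derive_minus (K:=R_AbsRing) (V:=R_NormedModule)); [|exact D4].
    apply (is_derive_minus (K:=R_AbsRing) (V:=R_NormedModule)); [|exact D3].
    apply (is_derive_minus (K:=R_AbsRing) (V:=R_NormedModule)).
    apply is_derive_scal; exact D1. apply is_derive_scal; exact D2. }
  replace 0 with (2 * (/ a ^ 2 * (- ln (1 - p) / p)) - 2 * (- ln (1 - a) / a)
                 - 2 * (1 - a) / a ^ 3 * (- ln (1 - q) / q) - 2 * ln a / a).
  exact D.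
  assert (E1 : 1 - p = (1 - a) / a) by (unfold p; field; lra).
  assert (E2 : 1 - q = ((1 - a) / a) ^ 2) by (unfold q; field; lra).
  assert (L1 : ln ((1 - a) / a) = ln (1 - a) - ln a) by (apply ln_div; lra).
  rewrite E2, ln_pow, E1, L1 by (apply Rdiv_lt_0_compat; lra).
  unfold p, q. simpl INR. field. repeat split; try lra.
Qed.

Lemma ball_R (x e y : R) : ball x e y -> Rabs (y - x) < e.
Proof. intros H. exact H. Qed.

Lemma pow_n_1 n : @pow_n R_AbsRing 1 n = 1.
Proof. induction n; simpl; auto. rewrite IHn. change mult with Rmult. ring. Qed.

Lemma Abel_cc : filterlim (PSeries cc) (at_left 1) (locally (PSeries cc 1)).
Proof.
  assert (H := Abel cc).
  rewrite rad_cc in H. simpl in H. apply H.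
  - simpl; lra.
  - simpl; auto.
  - exists (PI^2/6). unfold is_pseries.
    apply is_series_ext with (a := fun k => / INR (S k) ^ 2).
    intros n. rewrite pow_n_1. unfold cc. change scal with Rmult. simpl. ring.
    apply basel.
Qed.

Lemma Li2_left eps : 0 < eps -> exists d, 0 < d /\ forall y, 1 - d < y < 1 -> Rabs (Li2 y - Li2 1) < eps.
Proof.
  intros He.
  set (P1 := PSeries cc 1).
  assert (He2 : 0 < eps / 2) by lra.
  destruct (proj1 (filterlim_locally (PSeries cc) P1) Abel_cc (mkposreal _ He2)) as [d Hd].
  set (M := Rabs P1 + 1).
  assert (HM : 0 < M) by (unfold M; pose proof (Rabs_pos P1); lra).
  exists (Rmin d (Rmin (eps / 2 / M) 1)). split.
  { apply Rmin_pos. apply cond_pos. apply Rmin_pos. apply Rdiv_lt_0_compat; lra. lra. }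
  intros y Hy.
  pose proof (Rmin_l d (Rmin (eps / 2 / M) 1)).
  pose proof (Rmin_r d (Rmin (eps / 2 / M) 1)).
  pose proof (Rmin_l (eps / 2 / M) 1). pose proof (Rmin_r (eps / 2 / M) 1).
  assert (B : Rabs (PSeries cc y - P1) < eps / 2).
  { apply ball_R. apply Hd. 2: lra.
    unfold ball; simpl; unfold AbsRing_ball, abs, minus, plus, opp; simpl.
    rewrite Rabs_left; lra. }
  rewrite !Li2_PS, !PSeries_incr_1. fold P1.
  replace (y * PSeries cc y - 1 * P1) with (y * (PSeries cc y - P1) + (y - 1) * P1) by ring.
  eapply Rle_lt_trans. apply Rabs_triang.
  rewrite !Rabs_mult.
  assert (Rabs y <= 1) by (rewrite Rabs_right; lra).
  assert (Rabs (y - 1) < eps / 2 / M) by (rewrite Rabs_left; lra).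
  assert (Rabs y * Rabs (PSeries cc y - P1) <= Rabs (PSeries cc y - P1)).
  { pose proof (Rabs_pos (PSeries cc y - P1)). pose proof (Rabs_pos y). nra. }
  assert (Rabs (y - 1) * Rabs P1 <= eps / 2).
  { assert (Rabs P1 <= M) by (unfold M; lra).
    pose proof (Rabs_pos (y-1)). pose proof (Rabs_pos P1).
    apply Rle_trans with (Rabs (y - 1) * M). nra.
    replace (eps / 2) with (eps / 2 / M * M) by (field; lra). nra. }
  lra.
Qed.

Lemma ln_near1 eps : 0 < eps -> exists d, 0 < d /\ forall y, Rabs (y - 1) < d -> Rabs (ln y) < eps.
Proof.
  intros He.
  assert (C : continuous ln 1).
  { apply (ex_derive_continuous (K:=R_AbsRing) (V:=R_NormedModule)). auto_derive. lra. }
  destruct (proj1 (filterlim_locally ln (ln 1)) C (mkposreal _ He)) as [d Hd].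
  exists d. split. apply cond_pos. intros y Hy.
  assert (Hb := Hd y Hy). apply ball_R in Hb. rewrite ln_1 in Hb. simpl in Hb.
  replace (ln y) with (ln y - 0) by ring. exact Hb.
Qed.

Lemma g_const a : 1/2 < a < 1 -> gfun a = - Li2 1.
Proof.
  intros Ha.
  assert (Hc : forall b, 1/2 < b < 1 -> gfun b = gfun a).
  { intros b Hb. apply const_deriv. intros t Ht. apply g_deriv.
    split.
    - apply Rlt_le_trans with (Rmin a b); [apply Rmin_glb_lt; lra | lra].
    - apply Rle_lt_trans with (Rmax a b); [lra | apply Rmax_lub_lt; lra]. }
  destruct (Req_dec (gfun a) (- Li2 1)) as [E|NE]; auto.
  exfalso.
  set (eps := Rabs (gfun a + Li2 1)).
  assert (He : 0 < eps) by (apply Rabs_pos_lt; intro; apply NE; lra).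
  destruct (Li2_left (eps / 8)) as [d1 [Hd1 H1]]. lra.
  destruct (ln_near1 (Rmin 1 (eps / 8))) as [d2 [Hd2 H2]]. apply Rmin_pos; lra.
  set (t := Rmin (d1 / 4) (Rmin (d2 / 2) (1 / 8))).
  assert (Ht0 : 0 < t) by (apply Rmin_pos; [lra | apply Rmin_pos; lra]).
  assert (Ht1 : t <= d1 / 4) by apply Rmin_l.
  assert (Ht2 : t <= d2 / 2) by (eapply Rle_trans; [apply Rmin_r | apply Rmin_l]).
  assert (Ht3 : t <= 1 / 8) by (eapply Rle_trans; [apply Rmin_r | apply Rmin_r]).
  set (b := 1 - t).
  assert (Hb : 1/2 < b < 1) by (unfold b; lra).
  pose proof (Hc b Hb) as Eb.
  assert (Ap : 1 - d1 < 2 - / b < 1).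
  { assert (E : 2 - / b = 1 - t / b) by (unfold b; field; lra).
    rewrite E. assert (0 < t / b) by (apply Rdiv_lt_0_compat; lra).
    assert (t / b < 2 * t) by (apply (Rmult_lt_reg_r b); [lra|]; replace (t / b * b) with t by (field; lra); nra).
    lra. }
  assert (Aq : 1 - d1 < (2 * b - 1) / b ^ 2 < 1).
  { assert (E : (2 * b - 1) / b ^ 2 = 1 - (t / b) ^ 2) by (unfold b; field; lra).
    rewrite E. assert (0 < t / b) by (apply Rdiv_lt_0_compat; lra).
    assert (t / b < 2 * t) by (apply (Rmult_lt_reg_r b); [lra|]; replace (t / b * b) with t by (field; lra); nra).
    assert ((t / b) ^ 2 < 4 * t * t) by nra.
    split; nra. }
  assert (Ab : 1 - d1 < b < 1) by (unfold b; lra).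
  pose proof (H1 _ Ap). pose proof (H1 _ Aq). pose proof (H1 _ Ab).
  assert (Hl : Rabs (ln b) < Rmin 1 (eps / 8)) by (apply H2; unfold b; rewrite Rabs_left; lra).
  pose proof (Rmin_l 1 (eps / 8)). pose proof (Rmin_r 1 (eps / 8)).
  assert (Hl2 : ln b ^ 2 < eps / 8).
  { rewrite <- (pow2_abs (ln b)). pose proof (Rabs_pos (ln b)). nra. }
  assert (Hs : Rabs (gfun b + Li2 1) < eps).
  { unfold gfun.
    destruct (Rabs_def2 _ _ H) as [A1 A2]. destruct (Rabs_def2 _ _ H0) as [B1 B2].
    destruct (Rabs_def2 _ _ H3) as [C1 C2].
    pose proof (pow2_ge_0 (ln b)).
    apply Rabs_def1; lra. }
  rewrite Eb in Hs. unfold eps in Hs. lra.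
Qed.

Lemma Li2_1 : Li2 1 = PI ^ 2 / 6.
Proof.
  unfold Li2. apply is_series_unique.
  apply is_series_ext with (a := fun k => / INR (S k) ^ 2).
  intros n. rewrite pow1. unfold Rdiv. rr; ring.
  apply basel.
Qed.

Theorem theorem3p1 (n : nat) (u : R) :
  (0 < n)%nat -> 0 < u -> Pn n u = 0 ->
  2 * Li2 (u ^ (n + 1)) - 2 * Li2 (u ^ n) - Li2 u - (INR n) ^ 2 * (ln u) ^ 2 = - zeta2.
Proof.
  intros Hn Hu HP.
  assert (Hu1 : u <> 1).
  { intro E. subst u. unfold Pn in HP.
    rewrite (sum_eq _ (fun _ => 1)) in HP by (intros; apply pow1).
    rewrite (sum_eq (fun k => 1 ^ k) (fun _ => 1)) in HP by (intros; apply pow1).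
    rewrite !sum_cte in HP. replace (S (n - 1)) with n in HP by lia.
    rewrite S_INR in HP. lra. }
  set (a := u ^ n).
  assert (Ha0 : 0 < a) by (apply pow_lt; auto).
  assert (Key : 2 * a - a * a * u - 1 = 0).
  { unfold Pn in HP.
    rewrite (sum_eq _ (fun k => u ^ k * a)) in HP by (intros; unfold a; rewrite pow_add; ring).
    rewrite <- scal_sum, !tech3 in HP by auto.
    replace (S (n - 1)) with n in HP by lia. fold a in HP.
    assert (1 - u <> 0) by lra.
    rewrite <- tech_pow_Rmult in HP. fold a in HP.
    apply (Rmult_eq_compat_r (1 - u)) in HP.
    replace ((a * ((1 - u * a) / (1 - u)) - (1 - a) / (1 - u)) * (1 - u)) with (2 * a - a * a * u - 1) in HP by (field; auto).
    lra. }
  assert (Hlt : u < 1).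
  { destruct (Rtotal_order u 1) as [L|[L|L]]; auto; [contradiction|].
    assert (1 < a) by (apply Rlt_pow_R1; auto). nra. }
  assert (Ha1 : a < 1) by (apply pow_lt_1_compat; [lra | auto]).
  assert (Ha2 : 1/2 < a) by (assert (0 < a * a * u) by (apply Rmult_lt_0_compat; [apply Rmult_lt_0_compat|]; lra); lra).
  assert (E1 : u ^ (n + 1) = 2 - / a).
  { rewrite pow_add, pow_1. fold a. apply (Rmult_eq_reg_r a); [| lra].
    replace ((2 - / a) * a) with (2 * a - 1) by (field; lra). lra. }
  assert (E2 : u = (2 * a - 1) / a ^ 2).
  { apply (Rmult_eq_reg_r (a ^ 2)); [| apply pow_nonzero; lra].
    replace ((2 * a - 1) / a ^ 2 * a ^ 2) with (2 * a - 1) by (field; lra). simpl. lra. }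
  assert (E3 : INR n ^ 2 * ln u ^ 2 = ln a ^ 2) by (unfold a; rewrite ln_pow; [ring | auto]).
  rewrite E3, E1. 
  replace (Li2 u) with (Li2 ((2 * a - 1) / a ^ 2)) by (rewrite <- E2; reflexivity).
  change (gfun a = - zeta2).
  rewrite g_const by lra. rewrite Li2_1. unfold zeta2. ring.
Qed.
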